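(* Consider a system of $M$ conservation laws with state space $\mathcal D\subset\mathbb R^M$, interface-normal flux $\mathbf f:\mathcal D\to\mathbb R^M$, entropy variables $\mathbf v=(v^1,\dots,v^M):\mathcal D\to\mathbb R^M$ and entropy flux potential $\Psi:\mathcal D\to\mathbb R$, and let $\mathbf f^{\mathrm{EC}}=(f^{\mathrm{EC},1},\dots,f^{\mathrm{EC},M}):\mathcal D\times\mathcal D\to\mathbb R^M$ be an entropy conservative two-point flux, i.e. $(\mathbf v(\mathbf u_R)-\mathbf v(\mathbf u_L))^T\mathbf f^{\mathrm{EC}}(\mathbf u_L,\mathbf u_R)=\Psi(\mathbf u_R)-\Psi(\mathbf u_L)$ for all $\mathbf u_L,\mathbf u_R\in\mathcal D$. Let $N_L,N_R\ge1$, let $\mathbf M_L\in\mathbb R^{(N_L+1)\times(N_L+1)}$, $\mathbf M_R\in\mathbb R^{(N_R+1)\times(N_R+1)}$ be diagonal with positive diagonal entries, and let $\mathbf P_{L2R}\in\mathbb R^{(N_R+1)\times(N_L+1)}$, $\mathbf P_{R2L}\in\mathbb R^{(N_L+1)\times(N_R+1)}$ satisfy $\mathbf P_{R2L}^T\mathbf M_L=\mathbf M_R\mathbf P_{L2R}$, $\mathbf P_{L2R}\mathbf 1^L=\mathbf 1^R$ and $\mathbf P_{R2L}\mathbf 1^R=\mathbf 1^L$. Let $\mathbf U^L_0,\dots,\mathbf U^L_{N_L}\in\mathcal D$ and $\mathbf U^R_0,\dots,\mathbf U^R_{N_R}\in\mathcal D$ be arbitrary (the left and right interface states). For $q=1,\dots,M$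 define $\mathbf F^q\in\mathbb R^{(N_L+1)\times(N_R+1)}$ by $[\mathbf F^q]_{ij}=f^{\mathrm{EC},q}(\mathbf U^L_i,\mathbf U^R_j)$ and the numerical surface fluxes $$\mathbf F^{q,L}:=\mathbb E\big(\mathbf P_{R2L}(\mathbf F^q)^T\big)\in\mathbb R^{N_L+1},\qquad \mathbf F^{q,R}:=\mathbb E\big(\mathbf P_{L2R}\mathbf F^q\big)\in\mathbb R^{N_R+1},$$ i.e. $F^{q,L}_i=\sum_{j=0}^{N_R}[\mathbf P_{R2L}]_{ij}f^{\mathrm{EC},q}(\mathbf U^L_i,\mathbf U^R_j)$ and $F^{q,R}_j=\sum_{i=0}^{N_L}[\mathbf P_{L2R}]_{ji}f^{\mathrm{EC},q}(\mathbf U^L_i,\mathbf U^R_j)$. Let $V^{q,L}_i=v^q(\mathbf U^L_i)$, $\Psi^L_i=\Psi(\mathbf U^L_i)$, $V^{q,R}_j=v^q(\mathbf U^R_j)$, $\Psi^R_j=\Psi(\mathbf U^R_j)$. Then these fluxes are primary and entropy conservative at the interface: for every $q=1,\dots,M$, $$\Delta U^q:=(\mathbf 1^R)^T\mathbf M_R\mathbf F^{q,R}-(\mathbf 1^L)^T\mathbf M_L\mathbf F^{q,L}=0,$$ and $$\Delta S:=\sum_{q=1}^M(\mathbf V^{q,R})^T\mathbf M_R\mathbf F^{q,R}-(\mathbf 1^R)^T\mathbf M_R\boldsymbol\Psi^R-\sum_{q=1}^M(\mathbf V^{q,L})^T\mathbf M_L\mathbf F^{q,L}+(\mathbf 1^L)^T\mathbf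 M_L\boldsymbol\Psi^L=0.$$
   Context: Setting: a nodal discontinuous Galerkin spectral element method (collocated on Legendre–Gauss–Lobatto nodes, so derivative/mass matrices satisfy the summation-by-parts property) for a hyperbolic system $\mathbf u_t+\mathbf f(\mathbf u)_x+\mathbf g(\mathbf u)_y=0$ with a strongly convex entropy $S(\mathbf u)$, entropy variables $\mathbf v=\partial S/\partial\mathbf u$, entropy flux $F$ (with $\mathbf v^T\mathbf f'(\mathbf u)=F'(\mathbf u)$) and entropy flux potential $\Psi=\mathbf v\cdot\mathbf f-F$. Two neighboring elements $L$ (left) and $R$ (right) share one full interface edge (same edge length, no hanging nodes) but may have different polynomial degrees $N_L,N_R$; $\mathbf M_L,\mathbf M_R$ are their 1D quadrature weight matrices on the interface. When entropy conservative volume fluxes are used, the rate of change of the total integral of the $q$-th conserved variable and of the total entropy receive, from this interface, exactly the contributions $\Delta U^q$ and $\Delta S$ (up to a common positive geometric factor); ''primary and entropy conservative'' means these vanish. Notation: for a square matrix $\mathbf W$, $\mathbb E(\mathbf W)$ is the vector of its diagonal entries; $\mathbf 1^L\in\mathbb R^{N_L+1}$, $\mathbf 1^R\in\mathbb R^{N_R+1}$ are all-ones vectors; $\boldsymbol\Psi^L,\boldsymbol\Psi^R,\mathbf V^{q,L},\mathbf V^{q,R}$ are the vectors with the indicated entries. *)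

(* Defs.v *)
From mathcomp Require Import all_boot all_order all_algebra.
Set Implicit Arguments. Unset Strict Implicit. Unset Printing Implicit Defensive.
Import Order.TTheory GRing.Theory Num.Theory.
Local Open Scope ring_scope.

Definition diagE (R : ringType) (n : nat) (W : 'M[R]_n) : 'cV[R]_n :=
  \col_i W i i.

Definition ones (R : ringType) (n : nat) : 'cV[R]_n := const_mx 1.

Definition pos_diag (R : numDomainType) (n : nat) (W : 'M[R]_n) : Prop :=
  is_diag_mx W /\ forall i, 0 < W i i.

(* Main.v *)
Require Import Defs.
From mathcomp Require Import all_boot all_order all_algebra.
From mathcomp Require Import ring.
Import Order.TTheory GRing.Theory Num.Theory.
Local Open Scope ring_scope.

Lemma mul_diag_r (R : ringType) m n (A : 'M[R]_(m, n)) (W : 'M[R]_n) r c :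
  is_diag_mx W -> (A *m W) r c = A r c * W c c.
Proof.
move=> /is_diag_mxP hW; rewrite mxE (bigD1 c) //= big1 ?addr0 //.
by move=> k hk; rewrite hW ?mulr0.
Qed.

Lemma mul_diag_l (R : ringType) m n (A : 'M[R]_(m, n)) (W : 'M[R]_m) r c :
  is_diag_mx W -> (W *m A) r c = W r r * A r c.
Proof.
move=> /is_diag_mxP hW; rewrite mxE (bigD1 r) //= big1 ?addr0 //.
by move=> k hk; rewrite hW ?mul0r // eq_sym.
Qed.

Lemma quad (R : comRingType) n (x y : 'cV[R]_n) (W : 'M[R]_n) :
  is_diag_mx W -> (x^T *m W *m y) 0 0 = \sum_j x j 0 * W j j * y j 0.
Proof.
move=> hW; rewrite mxE; apply: eq_bigr => j _.
by rewrite mul_diag_r // mxE.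
Qed.

Lemma dotE (R : comRingType) n (x y : 'cV[R]_n) :
  (x^T *m y) 0 0 = \sum_j x j 0 * y j 0.
Proof. by rewrite mxE; apply: eq_bigr => j _; rewrite mxE. Qed.
Theorem theorem1 (R : realFieldType) (M : nat)
  (D : {pred 'cV[R]_M})
  (f : 'cV[R]_M -> 'cV[R]_M)             (* interface-normal flux (unused) *)
  (v : 'cV[R]_M -> 'cV[R]_M)             (* entropy variables *)
  (Psi : 'cV[R]_M -> R)                  (* entropy flux potential *)
  (fEC : 'cV[R]_M -> 'cV[R]_M -> 'cV[R]_M)
  (hEC : forall uL uR, uL \in D -> uR \in D ->
     ((v uR - v uL)^T *m fEC uL uR) 0 0 = Psi uR - Psi uL)
  (NL NR : nat) (hNL : (1 <= NL)%N) (hNR : (1 <= NR)%N)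
  (ML : 'M[R]_NL.+1) (MR : 'M[R]_NR.+1)
  (hML : pos_diag ML) (hMR : pos_diag MR)
  (PL2R : 'M[R]_(NR.+1, NL.+1)) (PR2L : 'M[R]_(NL.+1, NR.+1))
  (hP : PR2L^T *m ML = MR *m PL2R)
  (hPL2R : PL2R *m ones R NL.+1 = ones R NR.+1)
  (hPR2L : PR2L *m ones R NR.+1 = ones R NL.+1)
  (UL : 'I_NL.+1 -> 'cV[R]_M) (UR : 'I_NR.+1 -> 'cV[R]_M)
  (hUL : forall i, UL i \in D) (hUR : forall j, UR j \in D) :
  let F q : 'M[R]_(NL.+1, NR.+1) := \matrix_(i, j) fEC (UL i) (UR j) q 0 in
  let FL q : 'cV[R]_NL.+1 := diagE (PR2L *m (F q)^T) in
  let FR q : 'cV[R]_NR.+1 := diagE (PL2R *m F q) in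
  let VL q : 'cV[R]_NL.+1 := \col_i v (UL i) q 0 in
  let VR q : 'cV[R]_NR.+1 := \col_j v (UR j) q 0 in
  let PsiL : 'cV[R]_NL.+1 := \col_i Psi (UL i) in
  let PsiR : 'cV[R]_NR.+1 := \col_j Psi (UR j) in
  (forall q : 'I_M,
     ((ones R NR.+1)^T *m MR *m FR q) 0 0
     - ((ones R NL.+1)^T *m ML *m FL q) 0 0 = 0)
  /\
  (\sum_(q < M) ((VR q)^T *m MR *m FR q) 0 0
   - ((ones R NR.+1)^T *m MR *m PsiR) 0 0
   - \sum_(q < M) ((VL q)^T *m ML *m FL q) 0 0
   + ((ones R NL.+1)^T *m ML *m PsiL) 0 0 = 0).
Proof.
move=> F FL FR VL VR PsiL PsiR.
case: hML => dL _; case: hMR => dR _.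
have hW i j : PR2L i j * ML i i = MR j j * PL2R j i.
  have /matrixP/(_ j i) := hP.
  by rewrite mul_diag_r // mul_diag_l // mxE.
have rowR j : \sum_i PL2R j i = 1.
  have /matrixP/(_ j 0) := hPL2R; rewrite !mxE => <-.
  by apply: eq_bigr => i _; rewrite mxE mulr1.
have rowL i : \sum_j PR2L i j = 1.
  have /matrixP/(_ i 0) := hPR2L; rewrite !mxE => <-.
  by apply: eq_bigr => j _; rewrite mxE mulr1.
set G := fun (i : 'I_NL.+1) (j : 'I_NR.+1) => MR j j * PL2R j i.
have eR (x : 'cV[R]_NR.+1) q : (x^T *m MR *m FR q) 0 0
    = \sum_i \sum_j G i j * (x j 0 * F q i j).
  rewrite quad // exchange_big /=; apply: eq_bigr => j _.
  rewrite !mxE mulr_sumr; apply: eq_bigr => i _.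
  by rewrite !mxE /G; ring.
have eL (x : 'cV[R]_NL.+1) q : (x^T *m ML *m FL q) 0 0
    = \sum_i \sum_j G i j * (x i 0 * F q i j).
  rewrite quad //; apply: eq_bigr => i _.
  rewrite !mxE mulr_sumr; apply: eq_bigr => j _.
  by rewrite !mxE /G -hW; ring.
split.
  move=> q; rewrite eR eL; apply/eqP; rewrite subr_eq0; apply/eqP.
  by apply: eq_bigr => i _; apply: eq_bigr => j _; rewrite !mxE.
have ePR : ((ones R NR.+1)^T *m MR *m PsiR) 0 0
    = \sum_i \sum_j G i j * Psi (UR j).
  rewrite quad // exchange_big /=; apply: eq_bigr => j _.
  by rewrite -mulr_suml /G -mulr_sumr rowR !mxE; ring.
have ePL : ((ones R NL.+1)^T *m ML *m PsiL) 0 0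
    = \sum_i \sum_j G i j * Psi (UL i).
  rewrite quad //; apply: eq_bigr => i _; rewrite -mulr_suml.
  have -> : \sum_j G i j = ML i i.
    rewrite /G; under eq_bigr do rewrite -hW.
    by rewrite -mulr_suml rowL mul1r.
  by rewrite !mxE mul1r.
have hA : \sum_(q < M) ((VR q)^T *m MR *m FR q) 0 0
    = \sum_i \sum_j G i j * (\sum_(q < M) VR q j 0 * F q i j).
  rewrite (eq_bigr _ (fun q _ => eR (VR q) q)) exchange_big; apply: eq_bigr => i _.
  by rewrite exchange_big; apply: eq_bigr => j _; rewrite mulr_sumr.
have hB : \sum_(q < M) ((VL q)^T *m ML *m FL q) 0 0
    = \sum_i \sum_j G i j * (\sum_(q < M) VL q i 0 * F q i j).
  rewrite (eq_bigr _ (fun q _ => eL (VL q) q)) exchange_big; apply: eq_bigr => i _.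
  by rewrite exchange_big; apply: eq_bigr => j _; rewrite mulr_sumr.
rewrite hA hB ePR ePL -sumrB -sumrB -big_split /=; apply: big1 => i _.
rewrite -sumrB -sumrB -big_split /=; apply: big1 => j _.
have e : \sum_(q < M) VR q j 0 * F q i j - \sum_(q < M) VL q i 0 * F q i j
    = Psi (UR j) - Psi (UL i).
  rewrite -(hEC _ _ (hUL i) (hUR j)) dotE -sumrB.
  by apply: eq_bigr => q _; rewrite !mxE mulrBl.
rewrite (_ : forall g s1 a s2 b : R, g*s1 - g*a - g*s2 + g*b = g*((s1-s2)-(a-b))); last by move=> *; ring.
by rewrite e subrr mulr0.
Qed.
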